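(* Let $x_1,x_2,\ldots$ be a sequence of complex numbers and let $y_1,y_2,\ldots$ be its invert transform. Then for all integers $1\le k\le n$, \[k!\,B_{n,k}(y_1,2!\cdot y_2,3!\cdot y_3,\ldots)=\sum_{i=k}^n\binom{i-1}{k-1}\,i!\,B_{n,i}(x_1,2!\cdot x_2,3!\cdot x_3,\ldots).\]
   Context: The invert transform $(y_n)_{n\ge1}$ of $(x_n)_{n\ge1}$ is defined by $y_n=x_n+\sum_{i=1}^{n-1}x_i\,y_{n-i}$ for $n\ge1$, equivalently $1+\sum_{n\ge1}y_nt^n=\bigl(1-\sum_{n\ge1}x_nt^n\bigr)^{-1}$. The partial Bell polynomial is $B_{n,k}(z_1,z_2,\ldots)=\sum \frac{n!}{j_1!j_2!\cdots}\prod_{i\ge1}\left(\frac{z_i}{i!}\right)^{j_i}$, the sum over nonnegative integers $j_1,j_2,\ldots$ with $\sum_i j_i=k$ and $\sum_i i\,j_i=n$. *)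

(* Defs.v *)
From HB Require Import structures.
From mathcomp Require Import all_boot all_order all_algebra.
From mathcomp Require Import reals Rstruct.
From mathcomp.real_closed Require Import complex.
Set Implicit Arguments. Unset Strict Implicit. Unset Printing Implicit Defensive.
Import Order.TTheory GRing.Theory Num.Theory.
Local Open Scope ring_scope.

Definition C : Type := complex Rdefinitions.R.

(* Sequences (x_n)_{n>=1} are functions nat -> C; the value at 0 is unused. *)

Definition invert_transform (x y : nat -> C) : Prop :=
  forall n : nat, (1 <= n)%N ->
    y n = x n + \sum_(1 <= i < n) x i * y (n - i)%N.

(* A multiplicity vector
   (j_1, j_2, ...) is encoded as j : {ffun 'I_n -> 'I_n.+1}, where j i is the
   multiplicity j_{i+1} of the part size i+1.  Since sum_i i j_i = n forces
   j_i = 0 for i > n and j_i <= n, this enumerates exactly the index set. *)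
Definition bell_partial (n k : nat) (z : nat -> C) : C :=
  \sum_(j : {ffun 'I_n -> 'I_n.+1} |
        ((\sum_(i < n) (j i : nat))%N == k) &&
        ((\sum_(i < n) i.+1 * j i)%N == n))
    (n`!)%:R / (\prod_(i < n) ((j i)`!)%:R)
      * \prod_(i < n) (z i.+1 / (i.+1)`!%:R) ^+ (j i).

(* Main.v *)
Require Import Defs.
From HB Require Import structures.
From mathcomp Require Import all_boot all_order all_algebra.
From mathcomp Require Import reals Rstruct.
From mathcomp.real_closed Require Import complex.
From mathcomp Require Import ring.
Import Order.TTheory GRing.Theory Num.Theory.
Local Open Scope ring_scope.

Definition fcons {T : finType} {m} (t : T) (g : {ffun 'I_m -> T}) : {ffun 'I_m.+1 -> T} :=
  [ffun i => if unlift ord0 i is Some i' then g i' else t].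

Lemma fcons0 (T : finType) m t (g : {ffun 'I_m -> T}) : fcons t g ord0 = t.
Proof. by rewrite ffunE unlift_none. Qed.

Lemma fconsS (T : finType) m t (g : {ffun 'I_m -> T}) i : fcons t g (lift ord0 i) = g i.
Proof. by rewrite ffunE liftK. Qed.

Lemma big_ffun_cons (V : nmodType) (T : finType) m (F : {ffun 'I_m.+1 -> T} -> V) :
  \sum_f F f = \sum_(t : T) \sum_(g : {ffun 'I_m -> T}) F (fcons t g).
Proof.
rewrite pair_big /=.
rewrite (reindex (fun p : T * {ffun 'I_m -> T} => fcons p.1 p.2)) //=.
apply: onW_bij.
exists (fun f : {ffun 'I_m.+1 -> T} => (f ord0, [ffun i => f (lift ord0 i)])).
  move=> [t g] /=; rewrite fcons0; congr (_, _); apply/ffunP => i.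
  by rewrite ffunE fconsS.
move=> f; apply/ffunP => i; rewrite ffunE /=.
by case: unliftP => [j ->|->]; rewrite ?ffunE.
Qed.

Lemma fact_neq0 (F : numFieldType) n : (n`!)%:R != 0 :> F.
Proof. by rewrite pnatr_eq0 -lt0n fact_gt0. Qed.

Definition multN {F : numFieldType} {A : comAlgType F} m b k (a : nat -> A) : A :=
  \sum_(j : {ffun 'I_m -> 'I_b})
     (if (\sum_(i < m) (j i : nat))%N == k
      then (\prod_(i < m) ((j i)`!)%:R : F)^-1 *: \prod_(i < m) a i ^+ j i
      else 0).

Lemma multinomial (F : numFieldType) (A : comAlgType F) m b :
  forall k (a : nat -> A), (k < b)%N ->
  (\sum_(i < m) a i) ^+ k = (k`!)%:R *: multN m b k a.
Proof.
elim: m => [|m IH] k a kb.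
  rewrite /multN big_ord0.
  under eq_bigr do rewrite !big_ord0.
  rewrite sumr_const card_ffun !card_ord expn0.
  case: k kb => [|k] kb /=; last by rewrite scaler0 expr0n.
  by rewrite invr1 scale1r expr0 scale1r.
rewrite /multN big_ffun_cons [in LHS]big_ord_recl addrC exprDn.
have E : forall (t : 'I_b) (g : {ffun 'I_m -> 'I_b}),
  (if (\sum_(i < m.+1) (fcons t g i : nat))%N == k
   then (\prod_(i < m.+1) ((fcons t g i)`!)%:R : F)^-1 *: \prod_(i < m.+1) a i ^+ fcons t g i
   else 0) =
  (if (t + \sum_(i < m) (g i : nat))%N == k
   then ((t`!)%:R * \prod_(i < m) ((g i)`!)%:R : F)^-1 *: (a 0%N ^+ t * \prod_(i < m) a i.+1 ^+ g i)
   else 0).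
  move=> t g; rewrite !big_ord_recl !fcons0.
  rewrite (eq_bigr (fun i => (g i : nat))); last by move=> i _; rewrite fconsS.
  rewrite (eq_bigr (fun i => ((g i)`!)%:R : F)); last by move=> i _; rewrite fconsS.
  rewrite (eq_bigr (fun i : 'I_m => a i.+1 ^+ g i)) //.
  by move=> i _; rewrite fconsS lift0.
pose a' := fun i => a i.+1.
transitivity ((k`!)%:R *: \sum_(t : 'I_b) \sum_(g : {ffun 'I_m -> 'I_b})
  (if (t + \sum_(i < m) (g i : nat))%N == k
   then ((t`!)%:R * \prod_(i < m) ((g i)`!)%:R : F)^-1 *: (a 0%N ^+ t * \prod_(i < m) a' i ^+ g i)
   else 0)); last first.
  congr (_ *: _); apply: eq_bigr => t _; apply: eq_bigr => g _; symmetry; exact: E.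
have E2 : forall t : 'I_b, \sum_(g : {ffun 'I_m -> 'I_b})
  (if (t + \sum_(i < m) (g i : nat))%N == k
   then ((t`!)%:R * \prod_(i < m) ((g i)`!)%:R : F)^-1 *: (a 0%N ^+ t * \prod_(i < m) a' i ^+ g i)
   else 0) = if (t <= k)%N then ((t`!)%:R : F)^-1 *: (a 0%N ^+ t * ((((k - t)`!)%:R : F)^-1 *: (\sum_(i < m) a' i) ^+ (k - t))) else 0.
  move=> t; case: leqP => tk.
    have ktb : (k - t < b)%N by apply: leq_ltn_trans kb; apply: leq_subr.
    rewrite (IH (k - t)%N a' ktb).
 rewrite scalerA.
 rewrite mulVf ?fact_neq0 // scale1r.
    rewrite /multN mulr_sumr scaler_sumr; apply: eq_bigr => g _.
    have eqv : forall s, ((t + s)%N == k) = (s == (k - t)%N).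
      by move=> s; apply/eqP/eqP => [<-|->]; rewrite ?addKn ?subnKC.
    rewrite eqv.
    case: ifP => _; last by rewrite !(scaler0, mulr0).
    by rewrite invfM -scalerA scalerAr.
  rewrite big1 // => g _; case: ifP => // /eqP ek.
  by move: tk; rewrite -ek ltnNge leq_addr.
rewrite (eq_bigr _ (fun t _ => E2 t)).
rewrite (big_ord_widen b (fun i : nat => (\sum_(i0 < m) a (lift ord0 i0)) ^+ (k - i) * a ord0 ^+ i *+ 'C(k, i)) kb).
have -> : \sum_(i0 < m) a (lift ord0 i0) = \sum_(i0<m) a' i0 by apply: eq_bigr => j _; rewrite lift0.
rewrite big_mkcond scaler_sumr; apply: eq_bigr => i _; rewrite ltnS.
case: ifP => ik; last by rewrite scaler0.
change (a ord0) with (a 0%N).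
rewrite -scaler_nat -scalerAr !scalerA [a 0%N ^+ _ * _]mulrC.
congr (_ *: _).
have h1 := @fact_neq0 F i. have h2 := @fact_neq0 F (k - i).
rewrite -(bin_fact ik) !natrM. field. by apply/andP.
Qed.

Lemma prod_monoms n (z : nat -> C) (j : {ffun 'I_n -> 'I_n.+1}) :
  \prod_(i < n) (z i.+1 *: 'X^(i.+1)) ^+ j i
  = (\prod_(i < n) z i.+1 ^+ j i) *: 'X^(\sum_(i < n) i.+1 * j i)%N.
Proof.
rewrite (eq_bigr (fun i : 'I_n => z i.+1 ^+ j i *: 'X ^+ (i.+1 * j i)%N)); last first.
  by move=> i _; rewrite exprZn exprM.
by rewrite scaler_prod prodrXr.
Qed.

Lemma bell_coef (z : nat -> C) n k : (k <= n)%N ->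
  (k`!)%:R * bell_partial n k (fun i => (i`!)%:R * z i)
  = (n`!)%:R * ((\sum_(i < n) z i.+1 *: 'X^(i.+1)) ^+ k)`_n.
Proof.
move=> kn.
rewrite (@multinomial C {poly C} n n.+1 k (fun i => z i.+1 *: 'X^(i.+1))) //.
rewrite coefZ /multN coef_sum /bell_partial big_mkcond /=.
rewrite !mulr_sumr; apply: eq_bigr => j _.
case hk: ((\sum_(i < n) (j i : nat))%N == k); rewrite /= ?coef0 ?mulr0 //.
rewrite prod_monoms !coefZ coefXn.
have -> : \prod_(i < n) (((i.+1)`!)%:R * z i.+1 / ((i.+1)`!)%:R) ^+ j i = \prod_(i < n) z i.+1 ^+ j i.
  by apply: eq_bigr => i _; rewrite mulrC mulKf // fact_neq0.
rewrite [(n == _)]eq_sym.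
case: (_ == n)%N; rewrite /= ?mulr0 ?mulr1 ?mulr0 //.
ring.
Qed.

Definition ser (z : nat -> C) n : {poly C} := \sum_(i < n) z i.+1 *: 'X^(i.+1).

Lemma ser_poly z n : ser z n = \poly_(i < n.+1) (if i == 0%N then 0 else z i).
Proof.
rewrite poly_def big_ord_recl /=.
rewrite scale0r add0r /ser.
by apply: eq_bigr => i _; rewrite /bump leq0n add1n.
Qed.

Lemma coef_ser z n m : (ser z n)`_m = if (0 < m <= n)%N then z m else 0.
Proof.
rewrite ser_poly coef_poly ltnS.
by case: m => [|m] //=; rewrite if_same.
Qed.

Lemma ser_X z n : ser z n = 'X * \sum_(i < n) z i.+1 *: 'X^i.
Proof.
rewrite /ser mulr_sumr; apply: eq_bigr => i _.
by rewrite exprS scalerAr.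
Qed.

Lemma dvd_of_coef N (p : {poly C}) : (forall m, (m < N)%N -> p`_m = 0) -> 'X^N %| p.
Proof.
move=> h.
have t0 : take_poly N p = 0.
  apply/polyP => i; rewrite coef_take_poly coef0.
  by case: ifP => // /h.
rewrite -(poly_take_drop N p) t0 add0r.
exact: dvdp_mulIr.
Qed.

Lemma coef_of_dvd N (p : {poly C}) m : 'X^N %| p -> (m < N)%N -> p`_m = 0.
Proof.
move=> /dvdpP [q ->] mN.
by rewrite coefMXn mN.
Qed.

Lemma ser_pow_dvd z n N : 'X^N %| ser z n ^+ N.
Proof. by rewrite ser_X exprMn dvdp_mulIl. Qed.

Lemma uniq_mod (Xp A A' B : {poly C}) N :
  'X^N %| Xp ^+ N ->
  'X^N %| A - (B + Xp * A) -> 'X^N %| A' - (B + Xp * A') -> 'X^N %| A - A'.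
Proof.
move=> hX h1 h2.
have h3 : 'X^N %| (A - A') - Xp * (A - A').
  have -> : (A - A') - Xp * (A - A') = (A - (B + Xp * A)) - (A' - (B + Xp * A')) by ring.
  exact: dvdp_sub.
have h4 : forall j, 'X^N %| (A - A') - Xp ^+ j * (A - A').
  elim=> [|j IH]; first by rewrite expr0 mul1r subrr dvdp0.
  have -> : (A - A') - Xp ^+ j.+1 * (A - A') =
    ((A - A') - Xp * (A - A')) + Xp * ((A - A') - Xp ^+ j * (A - A')) by rewrite exprS; ring.
  by apply: dvdp_add => //; apply: dvdp_mull.
have -> : A - A' = ((A - A') - Xp ^+ N * (A - A')) + Xp ^+ N * (A - A') by ring.
by apply: dvdp_add => //; apply: dvdp_mulr.
Qed.

Lemma inv_rel (x y : nat -> C) (hy : invert_transform x y) n :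
  'X^(n.+1) %| ser y n - (ser x n + ser x n * ser y n).
Proof.
apply: dvd_of_coef => m; rewrite ltnS => mn.
rewrite coefB coefD coefM !coef_ser.
case: m mn => [|m] mn.
  by rewrite big_ord1 !coef_ser /= mul0r !addr0 subrr.
rewrite /= mn /= (hy m.+1 (ltn0Sn m)).
apply/eqP; rewrite subr_eq0; apply/eqP; congr (_ + _).
rewrite -(big_mkord xpredT (fun j => (ser x n)`_j * (ser y n)`_(m.+1 - j))).
rewrite big_nat_recl // coef_ser /= mul0r add0r.
rewrite [RHS]big_nat_recr //= subnn (coef_ser y n 0) /= mulr0 addr0.
rewrite big_add1 /=.
idtac.
apply: eq_big_nat => i /andP [_ im].
rewrite !coef_ser /= subSS subn_gt0 im /=.
have -> : (i.+1 <= n)%N by apply: leq_trans mn; apply: ltnW.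
have -> : (m - i <= n)%N by apply: leq_trans (leq_subr _ _) _; apply: ltnW.
by [].
Qed.

Definition Tk (Xp : {poly C}) n k : {poly C} := \sum_(i < n) ('C(i, k))%:R * Xp ^+ i.+1.

Lemma Tk_shift (Xp : {poly C}) n (c : nat -> nat) :
  \sum_(i < n.+1) (c i)%:R * Xp ^+ i.+1 =
  (c 0%N)%:R * Xp + Xp * \sum_(i < n) (c i.+1)%:R * Xp ^+ i.+1.
Proof.
rewrite big_ord_recl expr1 mulr_sumr; congr (_ + _).
by apply: eq_bigr => i _; rewrite lift0 exprS; ring.
Qed.

Lemma Tk0 Xp n : 'X^(n.+1) %| Xp ^+ n.+1 ->
  'X^(n.+1) %| Tk Xp n 0 - (Xp + Xp * Tk Xp n 0).
Proof.
move=> hX.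
have e := Tk_shift Xp n (fun _ => 1%N).
rewrite big_ord_recr /= in e.
have -> : Xp + Xp * Tk Xp n 0 = Tk Xp n 0 + Xp ^+ n.+1.
  rewrite /Tk (eq_bigr (fun i : 'I_n => 1%:R * Xp ^+ i.+1)); last by move=> i _; rewrite bin0.
  have -> : Xp + Xp * \sum_(i < n) (1%N)%:R * Xp ^+ i.+1 = (1%N)%:R * Xp + Xp * \sum_(i < n) (1%N)%:R * Xp ^+ i.+1.
    by rewrite mulr1n mul1r.
  by rewrite -e mulr1n mul1r.
by rewrite opprD addrA subrr sub0r dvdpNr.
Qed.

Lemma TkS Xp n k : 'X^(n.+1) %| Xp ^+ n.+1 ->
  'X^(n.+1) %| Tk Xp n k.+1 - (Xp * Tk Xp n k + Xp * Tk Xp n k.+1).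
Proof.
move=> hX.
have e := Tk_shift Xp n (fun i => 'C(i, k.+1)).
rewrite big_ord_recr /= in e.
have -> : Xp * Tk Xp n k + Xp * Tk Xp n k.+1 = Tk Xp n k.+1 + ('C(n, k.+1))%:R * Xp ^+ n.+1.
  rewrite -mulrDr /Tk -big_split /=.
  rewrite (eq_bigr (fun i : 'I_n => ('C(i.+1, k.+1))%:R * Xp ^+ i.+1)); last first.
    by move=> i _; rewrite binS natrD mulrDl addrC.
  by rewrite e bin0n /= mul0r add0r.
rewrite opprD addrA subrr sub0r dvdpNr.
by apply: dvdp_mull.
Qed.

Lemma main_mod (x y : nat -> C) (hy : invert_transform x y) n k :
  'X^(n.+1) %| ser y n ^+ k.+1 - Tk (ser x n) n k.
Proof.
have hX := ser_pow_dvd x n n.+1.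
have hr := inv_rel x y hy n.
elim: k => [|k IH].
  apply: (uniq_mod _ _ _ (ser x n) _ hX); first by rewrite expr1.
  exact: Tk0.
apply: (uniq_mod _ _ _ (ser x n * ser y n ^+ k.+1) _ hX).
  have -> : ser y n ^+ k.+2 - (ser x n * ser y n ^+ k.+1 + ser x n * ser y n ^+ k.+2)
    = ser y n ^+ k.+1 * (ser y n - (ser x n + ser x n * ser y n)) by rewrite !exprS; ring.
  exact: dvdp_mull.
have -> : Tk (ser x n) n k.+1 - (ser x n * ser y n ^+ k.+1 + ser x n * Tk (ser x n) n k.+1)
  = (Tk (ser x n) n k.+1 - (ser x n * Tk (ser x n) n k + ser x n * Tk (ser x n) n k.+1))
    - ser x n * (ser y n ^+ k.+1 - Tk (ser x n) n k) by ring.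
apply: dvdp_sub; first exact: TkS.
exact: dvdp_mull.
Qed.

Theorem mainTheorem7 (x y : nat -> C) (hy : invert_transform x y)
    (n k : nat) (hk : (1 <= k)%N) (hkn : (k <= n)%N) :
  (k`!)%:R * bell_partial n k (fun i => (i`!)%:R * y i)
  = \sum_(k <= i < n.+1)
      ('C(i.-1, k.-1))%:R * (i`!)%:R * bell_partial n i (fun m => (m`!)%:R * x m).
Proof.
move: hk; case: k hkn => [//|k] hkn _.
rewrite (bell_coef y n k.+1 hkn).
change (\sum_(i < n) y i.+1 *: 'X^(i.+1)) with (ser y n).
have eR : forall i, (k.+1 <= i < n.+1)%N ->
  ('C(i.-1, k.+1.-1))%:R * (i`!)%:R * bell_partial n i (fun m => (m`!)%:R * x m)
  = (n`!)%:R * (('C(i.-1, k))%:R * (ser x n ^+ i)`_n).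
  move=> i /andP [_ iN]; rewrite -mulrA (bell_coef x n i iN) /=.
  by rewrite /ser mulrCA.
rewrite (eq_big_nat _ _ eR) -mulr_sumr; congr (_ * _).
have cY : (ser y n ^+ k.+1)`_n = (Tk (ser x n) n k)`_n.
  apply/eqP; rewrite -subr_eq0 -coefB; apply/eqP.
  exact: (coef_of_dvd _ _ _ (main_mod x y hy n k) (ltnSn n)).
rewrite cY /Tk coef_sum.
rewrite (eq_bigr (fun i : 'I_n => ('C(i.+1.-1, k))%:R * (ser x n ^+ i.+1)`_n)); last first.
  by move=> i _; rewrite [_%:R * ser x n ^+ _]mulr_natl coefMn mulr_natl.
have -> : \sum_(k.+1 <= i < n.+1) ('C(i.-1, k))%:R * (ser x n ^+ i)`_n
  = \sum_(1 <= i < n.+1) ('C(i.-1, k))%:R * (ser x n ^+ i)`_n.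
  rewrite [in RHS](big_cat_nat _ (n := k.+1)) //=.
  rewrite [X in _ = X + _]big1_seq ?add0r // => i; rewrite mem_index_iota => /andP [i1 ik].
  case: i i1 ik => [//|j] _ ik.
  by rewrite bin_small ?mul0r.
  exact: ltnW hkn.
by rewrite big_add1 /= big_mkord.
Qed.
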